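(* Let $\Omega\subset\mathbb{R}^N$ be open, let $\Phi,\Psi$ be Young functions satisfying $\Delta_2$ with $\tilde\Phi,\Psi\in\Delta'$, and let $g\in L^1_{\mathrm{loc}}(\Omega)$, $g\ge0$. If there is $C_1>0$ such that $\|u\|_{L^{\Psi,g}(\Omega)}\le C_1\|\nabla u\|_{L^\Phi(\Omega)}$ for all $u\in\mathcal{C}^1_c(\Omega)$, then there exists $C_2=C_2(\Phi,\Psi)>0$ such that \[ \Psi^{-1}\!\left(\int_\Omega g\,\Psi(|u|)\,dx\right)\le C_2C_1\,\Phi^{-1}\!\left(\int_\Omega\Phi(|\nabla u|)\,dx\right)\qquad\forall u\in\mathcal{C}^1_c(\Omega). \]
   Context: A Young function is $\Phi(t)=\int_0^t\varphi(s)\,ds$ with $\varphi$ increasing, right continuous, $\varphi(t)=0$ iff $t=0$; $\tilde\Phi(t)=\sup_{s>0}\{st-\Phi(s)\}$. $\Delta_2$: $\Phi(2t)\le C\Phi(t)$ for all $t\ge0$; $\Delta'$: $\Phi(st)\le C\Phi(s)\Phi(t)$ for all $s,t\ge0$ (some $C>1$). $\|u\|_{L^{\Psi,g}(\Omega)}=\inf\{\lambda>0:\int_\Omega\Psi(|u|/\lambda)g\,dx\le1\}$ and $\|\nabla u\|_{L^\Phi(\Omega)}=\inf\{\lambda>0:\int_\Omega\Phi(|\nabla u|/\lambda)dx\le1\}$ (Luxemburg norms). *)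

(* Defs.v *)
From HB Require Import structures.
From mathcomp Require Import all_boot all_order all_algebra.
From mathcomp Require Import all_classical all_reals all_analysis.
From mathcomp Require Import measurable_realfun.

Set Implicit Arguments.
Unset Strict Implicit.
Unset Printing Implicit Defensive.

Import Order.TTheory GRing.Theory Num.Theory.
Import numFieldNormedType.Exports.

Local Open Scope classical_set_scope.
Local Open Scope ring_scope.

Section Defs.
Variable R : realType.

Definition young (Phi : R -> R) : Prop :=
  exists phi : R -> R,
    (forall s t, 0 <= s -> s <= t -> phi s <= phi t) /\
    (forall t, 0 <= t -> phi x @[x --> t^'+] --> phi t) /\
    (forall t, 0 <= t -> (phi t = 0 <-> t = 0)) /\
    (forall t, 0 <= t ->
       (Phi t)%:E = (\int[@lebesgue_measure R]_(s in `[0%R, t]) (phi s)%:E)%E).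

Definition young_conj (Phi : R -> R) (t : R) : \bar R :=
  ereal_sup [set (s * t - Phi s)%:E | s in `]0, +oo[].

Definition Delta2 (Phi : R -> R) : Prop :=
  exists C : R, 1 < C /\ forall t, 0 <= t -> Phi (2 * t) <= C * Phi t.

Definition Deltap (Phi : R -> R) : Prop :=
  exists C : R, 1 < C /\
    forall s t, 0 <= s -> 0 <= t -> Phi (s * t) <= C * Phi s * Phi t.

Definition young_inv (Phi : R -> R) (y : R) : R :=
  sup [set t | 0 <= t /\ Phi t <= y].

Definition young_einv (Phi : R -> R) (y : \bar R) : \bar R :=
  match y with
  | r%:E => (young_inv Phi r)%:E
  | +oo%E => +oo%E
  | -oo%E => 0%E
  end.

(* iterated Lebesgue integral over R^n of a function of n real variables;
   by Tonelli this is the Lebesgue integral on R^n for nonnegative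
   (product-/Borel-) measurable integrands *)
Fixpoint lint (n : nat) : (n.-tuple R -> \bar R) -> \bar R :=
  match n with
  | 0 => fun f => f [tuple]
  | n'.+1 => fun f =>
      (\int[@lebesgue_measure R]_x lint (fun t : n'.-tuple R => f [tuple of x :: t]))%E
  end.

Definition rowt (n : nat) (t : n.-tuple R) : 'rV[R]_n := \row_i tnth t i.

Definition ext0 (n : nat) (D : set 'rV[R]_n) (f : 'rV[R]_n -> \bar R) (x : 'rV[R]_n) : \bar R :=
  if `[< D x >] then f x else 0%E.

Definition intRN (n : nat) (D : set 'rV[R]_n) (f : 'rV[R]_n -> \bar R) : \bar R :=
  lint (fun t => ext0 D f (rowt t)).

Definition L1loc (n : nat) (Omega : set 'rV[R]_n) (g : 'rV[R]_n -> R) : Prop :=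
  measurable_fun [set: n.-tuple R]
    ((fun t => ext0 Omega (fun x => (g x)%:E) (rowt t)) : n.-tuple R -> \bar R) /\
  forall K : set 'rV[R]_n, compact K -> K `<=` Omega ->
    (intRN K (fun x => (`|g x|)%:E) < +oo)%E.

Definition unit_vec (n : nat) (i : 'I_n) : 'rV[R]_n := delta_mx 0 i.

Definition partial (n : nat) (u : 'rV[R]_n -> R) (i : 'I_n) (x : 'rV[R]_n) : R :=
  'D_(unit_vec i) u x.

Definition grad_norm (n : nat) (u : 'rV[R]_n -> R) (x : 'rV[R]_n) : R :=
  Num.sqrt (\sum_(i < n) (partial u i x) ^+ 2).

Definition C1c (n : nat) (Omega : set 'rV[R]_n) (u : 'rV[R]_n -> R) : Prop :=
  (forall x, Omega x -> differentiable u x) /\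
  (forall i x, Omega x -> {for x, continuous (partial u i)}) /\
  compact (closure [set x | Omega x /\ u x <> 0]) /\
  closure [set x | Omega x /\ u x <> 0] `<=` Omega.

Definition lux_weighted (n : nat) (Psi : R -> R) (Omega : set 'rV[R]_n)
    (g : 'rV[R]_n -> R) (u : 'rV[R]_n -> R) : \bar R :=
  ereal_inf [set lam%:E | lam in
    [set lam : R | 0 < lam /\
       (intRN Omega (fun x => (Psi (`|u x| / lam) * g x)%:E) <= 1)%E]].

Definition lux_grad (n : nat) (Phi : R -> R) (Omega : set 'rV[R]_n)
    (u : 'rV[R]_n -> R) : \bar R :=
  ereal_inf [set lam%:E | lam in
    [set lam : R | 0 < lam /\
       (intRN Omega (fun x => (Phi (grad_norm u x / lam))%:E) <= 1)%E]].

End Defs.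

(* Main.v *)
Require Import Defs.
From HB Require Import structures.
From mathcomp Require Import all_boot all_order all_algebra.
From mathcomp Require Import all_classical all_reals all_analysis.
From mathcomp Require Import measurable_realfun.
From mathcomp Require Import ring lra.
Import Order.TTheory GRing.Theory Num.Theory.
Import numFieldNormedType.Exports.
Local Open Scope classical_set_scope.
Local Open Scope ring_scope.
Section IntLemmas.
Local Open Scope ereal_scope.
Context d (T : measurableType d) (R : realType) (mu : {measure set T -> \bar R}).
Import HBNNSimple.

Lemma int_mono (f g : T -> \bar R) : (forall x, 0 <= f x) -> (forall x, f x <= g x) ->
  \int[mu]_x f x <= \int[mu]_x g x.
Proof.
move=> f0 fg; rewrite !ge0_integralTE //; last by move=> x; exact: le_trans (f0 x) (fg x).
apply: ereal_sup_le => _ [h hf <-]; exists h => // x; exact: le_trans (hf x) (fg x).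
Qed.

Lemma int_scale (k : R) (f : T -> \bar R) : (0 < k)%R -> (forall x, 0 <= f x) ->
  \int[mu]_x (k%:E * f x) <= k%:E * \int[mu]_x f x.
Proof.
move=> k0 f0; rewrite !ge0_integralTE //; last by move=> x; rewrite mule_ge0 // lee_fin ltW.
apply: ge_ereal_sup => _ [h hk <-].
have ki0 : (0 <= k^-1)%R by rewrite invr_ge0 ltW.
pose h' := scale_nnsfun h ki0.
have -> : sintegral mu h = k%:E * sintegral mu h'.
  rewrite /h' sintegralrM muleA -EFinM divff ?gt_eqF ?mul1e //.
rewrite lee_pmul2l //; apply: ereal_sup_ubound; exists h' => // x /=.
rewrite EFinM -(@lee_pmul2l _ k%:E) // muleA -EFinM divff ?gt_eqF // mul1r; exact: hk.
Qed.
End IntLemmas.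
Section LintLemmas.
Local Open Scope ereal_scope.
Context (R : realType).

Lemma lint_ge0 n (f : n.-tuple R -> \bar R) : (forall t, 0 <= f t) -> 0 <= lint f.
Proof.
elim: n f => [|n IH] f f0 /=; first exact: f0.
by apply: integral_ge0 => x _; apply: IH.
Qed.

Lemma lint_mono n (f g : n.-tuple R -> \bar R) : (forall t, 0 <= f t) ->
  (forall t, f t <= g t) -> lint f <= lint g.
Proof.
elim: n f g => [|n IH] f g f0 fg /=; first exact: fg.
apply: int_mono => x; first by apply: lint_ge0.
by apply: IH.
Qed.

Lemma lint_scale_le n (k : R) (f : n.-tuple R -> \bar R) : (0 < k)%R ->
  (forall t, 0 <= f t) -> lint (fun t => k%:E * f t) <= k%:E * lint f.
Proof.
move=> k0; elim: n f => [|n IH] f f0 /=; first by [].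
apply: (@le_trans _ _ (\int[@lebesgue_measure R]_x (k%:E * lint (fun t => f [tuple of x :: t])))).
  apply: int_mono => x; last by apply: IH.
  by apply: lint_ge0 => t; rewrite mule_ge0 // lee_fin ltW.
apply: int_scale => // x; exact: lint_ge0.
Qed.

Lemma lint_scale n (k : R) (f : n.-tuple R -> \bar R) : (0 < k)%R ->
  (forall t, 0 <= f t) -> lint (fun t => k%:E * f t) = k%:E * lint f.
Proof.
move=> k0 f0; apply/eqP; rewrite eq_le lint_scale_le //=.
have ki0 : (0 < k^-1)%R by rewrite invr_gt0.
have := @lint_scale_le n k^-1 (fun t => k%:E * f t) ki0.
have -> : (fun t => k^-1%:E * (k%:E * f t)) = f.
  by apply: funext => t; rewrite muleA -EFinM mulVf ?gt_eqF // mul1e.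
have k0E : (0 <= k%:E) by rewrite lee_fin ltW.
move=> /(_ (fun t => mule_ge0 k0E (f0 t))) H.
rewrite -(@lee_pmul2l _ k^-1%:E) // muleA -EFinM mulVf ?gt_eqF // mul1e; exact: H.
Qed.
End LintLemmas.
Section IntD.
Local Open Scope ereal_scope.
Context d (T : measurableType d) (R : realType) (mu : {measure set T -> \bar R}).
Lemma int_mono_D (D : set T) (f g : T -> \bar R) : (forall x, D x -> 0 <= f x) ->
  (forall x, D x -> f x <= g x) ->
  \int[mu]_(x in D) f x <= \int[mu]_(x in D) g x.
Proof.
move=> f0 fg; rewrite !(integral_mkcond D); apply: int_mono => x; rewrite /patch;
  case: ifP => // /set_mem Dx; [exact: f0|exact: fg].
Qed.
End IntD.

Section Young.
Context (R : realType) (Phi phi : R -> R).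
Hypothesis mono : forall s t, 0 <= s -> s <= t -> phi s <= phi t.
Hypothesis zero : forall t, 0 <= t -> (phi t = 0 <-> t = 0).
Hypothesis intg : forall t, 0 <= t ->
  (Phi t)%:E = (\int[@lebesgue_measure R]_(s in `[0%R, t]) (phi s)%:E)%E.

Lemma phi_ge0 {t} : 0 <= t -> 0 <= phi t.
Proof. move=> t0; have <- : phi 0 = 0 by apply/zero. by apply: mono. Qed.

Lemma phi_gt0 {t} : 0 < t -> 0 < phi t.
Proof.
move=> t0; rewrite lt_neqAle phi_ge0 ?ltW // andbT eq_sym; apply/eqP => /zero.
by move=> /(_ (ltW t0)) t0'; move: t0; rewrite t0' ltxx.
Qed.

Let phi' x := phi (Num.max x 0).
Let phi'_nd : {homo phi' : x y / x <= y}.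
Proof.
move=> x y xy; apply: mono; first by rewrite le_max lexx orbT.
by rewrite ge_max le_max xy /= le_max lexx !orbT.
Qed.

Let intg' t : 0 <= t ->
  (Phi t)%:E = (\int[@lebesgue_measure R]_(s in `[0%R, t]) (phi' s)%:E)%E.
Proof.
move=> t0; rewrite intg //; apply: eq_integral => x; rewrite inE /= in_itv /= => /andP[x0 _].
by rewrite /phi' max_l.
Qed.

Lemma Phi_ge0 {t} : 0 <= t -> 0 <= Phi t.
Proof.
move=> t0; rewrite -lee_fin intg //; apply: integral_ge0 => x.
by rewrite /= in_itv /= => /andP[x0 _]; rewrite lee_fin phi_ge0.
Qed.

Lemma Phi_le {t} : 0 <= t -> Phi t <= t * phi t.
Proof.
move=> t0; rewrite -lee_fin intg //.
apply: (@le_trans _ _ (\int[@lebesgue_measure R]_(s in `[0%R, t]) (cst (phi t)%:E) s)%E).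
  apply: int_mono_D => x; rewrite /= in_itv /= => /andP[x0 xt].
    by rewrite lee_fin phi_ge0.
  by rewrite lee_fin mono.
rewrite integral_cst //= lebesgue_measure_itv /= lte_fin.
case: ifP => _; first by rewrite -EFinD subr0 -EFinM mulrC.
by rewrite mule0 lee_fin mulr_ge0 // phi_ge0.
Qed.

Lemma Phi0 : Phi 0 = 0.
Proof. by apply/eqP; rewrite eq_le Phi_ge0 // andbT; have := @Phi_le 0 (lexx _); rewrite mul0r. Qed.

Lemma Phi_supp {s r} : 0 <= s -> s <= r -> Phi s + (r - s) * phi s <= Phi r.
Proof.
move=> s0 sr; have r0 : 0 <= r by exact: le_trans sr.
rewrite -lee_fin EFinD !intg' //.
rewrite (@itv_bndbnd_setU _ _ (BLeft 0) (BRight s) (BRight r)) //. 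
have mf : measurable_fun (`[0, s] `|` `]s, r]) (fun x => (phi' x)%:E).
  by apply/measurable_EFinP; apply: nondecreasing_measurable => //; apply: measurableU.
have f0 : forall x, (`[0, s] `|` `]s, r]) x -> (0 <= (fun x => (phi' x)%:E) x)%E.
  move=> x _ /=; rewrite lee_fin; apply: phi_ge0.
  by rewrite le_max lexx orbT.
have dj : [disjoint `[0, s] & `]s, r]].
  apply/disj_setPS => x [] /=; rewrite !in_itv /= => /andP[_ xs] /andP[sx _].
  by move: (lt_le_trans sx xs); rewrite ltxx.
rewrite (ge0_integral_setU (@lebesgue_measure R) (measurable_itv _) (measurable_itv _) mf f0 dj).
rewrite leeD2l //.
apply: (@le_trans _ _ (\int[@lebesgue_measure R]_(x in `]s, r]) (cst (phi s)%:E) x)%E).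
  rewrite integral_cst //= lebesgue_measure_itv /= lte_fin.
  case: ifP => [_|/negbT]; first by rewrite -EFinD -EFinM mulrC.
  rewrite -leNgt => rs; have -> : r = s by apply/le_anti/andP.
  by rewrite subrr mul0r mule0.
apply: (@int_mono_D _ _ R (@lebesgue_measure R)) => x; rewrite /= in_itv /= => /andP[sx xr].
  by rewrite lee_fin phi_ge0.
by rewrite lee_fin /phi' max_l ?mono // ?ltW // (le_lt_trans s0 sx).
Qed.

Lemma Phi_mono {s r} : 0 <= s -> s <= r -> Phi s <= Phi r.
Proof.
move=> s0 sr; apply: le_trans _ (Phi_supp s0 sr); rewrite lerDl mulr_ge0 ?phi_ge0 //.
by rewrite subr_ge0.
Qed.

Lemma Phi_gt0 {t} : 0 < t -> 0 < Phi t.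
Proof.
move=> t0; have h0 : 0 <= t / 2 by lra.
have ht : t / 2 <= t by lra.
apply: lt_le_trans _ (Phi_supp h0 ht); apply: ltr_wpDl; first exact: Phi_ge0.
apply: mulr_gt0; last by apply: phi_gt0; lra.
lra.
Qed.

Lemma Phi_strict {s r} : 0 < s -> s < r -> Phi s < Phi r.
Proof.
move=> s0 sr; apply: lt_le_trans _ (Phi_supp (ltW s0) (ltW sr)).
by rewrite ltrDl mulr_gt0 ?phi_gt0 // subr_gt0.
Qed.

Lemma Phi_conv {K l} : 1 <= K -> 0 <= l -> K * Phi l <= Phi (K * l).
Proof.
move=> K1 l0; have hl : l <= K * l by rewrite ler_peMl.
apply: le_trans _ (Phi_supp l0 hl).
have := Phi_le l0; have := Phi_ge0 l0; have := phi_ge0 l0 => p0 P0 Pl.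
have : (K - 1) * Phi l <= (K - 1) * (l * phi l).
  by rewrite ler_wpM2l // subr_ge0.
move=> h; nra.
Qed.

Lemma Phi_big {t} : 1 <= t -> (t - 1) * phi 1 <= Phi t.
Proof.
move=> t1; apply: le_trans _ (Phi_supp ler01 t1); rewrite lerDr Phi_ge0 //.
Qed.

Lemma inv_set_ub {b} : 0 <= b -> has_ubound [set t | 0 <= t /\ Phi t <= b].
Proof.
move=> b0; have p1 : 0 < phi 1 by apply: phi_gt0; exact: ltr01.
exists (1 + b / phi 1) => t [t0 Pt].
have bp : 0 <= b / phi 1 by rewrite divr_ge0 // ltW.
have [t1|t1] := leP t 1; first by lra.
have h := Phi_big (ltW t1).
have : (t - 1) * phi 1 / phi 1 <= b / phi 1.
  by rewrite ler_pM2r ?invr_gt0 //; exact: le_trans h Pt.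
by rewrite mulfK ?gt_eqF //; lra.
Qed.

Lemma inv_ge0 b : 0 <= b -> 0 <= young_inv Phi b.
Proof.
move=> b0; rewrite /young_inv; apply: (ub_le_sup (inv_set_ub b0)); split => //.
by rewrite Phi0.
Qed.

Lemma inv_lt b s : 0 <= b -> young_inv Phi b < s -> b < Phi s.
Proof.
move=> b0 bs; have s0 : 0 <= s by apply: le_trans (ltW bs); exact: inv_ge0.
rewrite ltNge; apply/negP => Ps.
have : s <= young_inv Phi b by rewrite /young_inv; apply: (ub_le_sup (inv_set_ub b0)).
by rewrite leNgt bs.
Qed.

Lemma inv_le b M : 0 <= b -> (forall t, 0 <= t -> Phi t <= b -> t <= M) ->
  young_inv Phi b <= M.
Proof.
move=> b0 H; rewrite /young_inv; apply: ge_sup; first by exists 0; split => //; rewrite Phi0.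
by move=> t [t0 Pt]; exact: H.
Qed.

Lemma conj_lb t x : 0 < x -> ((x * t - Phi x)%:E <= young_conj Phi t)%E.
Proof.
move=> x0; apply: ereal_sup_ubound; exists x => //.
by rewrite /= in_itv /= andbT.
Qed.

Lemma conj_ub_phi a : 0 <= a -> (young_conj Phi (phi a) <= (a * phi a)%:E)%E.
Proof.
move=> a0; apply: ge_ereal_sup => _ [x + <-]; rewrite /= in_itv /= andbT => x0.
rewrite lee_fin; have pa := @phi_ge0 a a0.
have [xa|xa] := leP x a.
  have := @Phi_ge0 x (ltW x0); have : x * phi a <= a * phi a by rewrite ler_wpM2r.
  lra.
have := Phi_supp a0 (ltW xa); have := @Phi_ge0 a a0; nra.
Qed.

Lemma conj_ge0 t : 0 <= t -> (0 <= young_conj Phi t)%E.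
Proof.
move=> t0; apply/lee_addgt0Pr => e e0.
have p1 : 0 < phi 1 by apply: phi_gt0; exact: ltr01.
pose x := Num.min 1 (e / phi 1).
have x0 : 0 < x by rewrite lt_min ltr01 divr_gt0.
have x1 : x <= 1 by rewrite ge_min lexx.
have xe : x * phi 1 <= e.
  have : x <= e / phi 1 by rewrite ge_min lexx orbT.
  by rewrite ler_pdivlMr.
have Px : Phi x <= x * phi 1.
  apply: le_trans (Phi_le (ltW x0)) _; apply: ler_wpM2l; first exact: ltW.
  by apply: mono => //; exact: ltW.
apply: (@le_trans _ _ ((x * t - Phi x)%:E + e%:E)%E); last by rewrite leeD2r // conj_lb.
rewrite -EFinD lee_fin; have : 0 <= x * t by rewrite mulr_ge0 // ltW.
lra.
Qed.

Lemma supermult (Kp : R) :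
  (forall t, 0 <= t -> young_conj Phi t \is a fin_num) ->
  (forall s t, 0 <= s -> 0 <= t ->
     fine (young_conj Phi (s * t)) <= Kp * fine (young_conj Phi s) * fine (young_conj Phi t)) ->
  1 < Kp ->
  forall a b, 0 <= a -> 0 <= b -> Phi a * Phi b <= Phi ((Kp + 1) * a * b).
Proof.
move=> fin dp K1 a b a0 b0.
have x0 : 0 <= (Kp + 1) * a * b by rewrite !mulr_ge0 //; lra.
have [->|an0] := eqVneq a 0; first by rewrite Phi0 mul0r; apply: Phi_ge0; rewrite mulr0 mul0r.
have [->|bn0] := eqVneq b 0; first by rewrite Phi0 mulr0; apply: Phi_ge0; rewrite mulr0.
have ap : 0 < a by rewrite lt_neqAle eq_sym an0.
have bp : 0 < b by rewrite lt_neqAle eq_sym bn0.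
set F := fun t => fine (young_conj Phi t).
have pa := @phi_ge0 a a0; have pb := @phi_ge0 b b0.
have Fub c : 0 <= c -> F (phi c) <= c * phi c.
  move=> c0; rewrite -lee_fin /F fineK ?fin ?phi_ge0 //; exact: conj_ub_phi.
have Fge0 c : 0 <= c -> 0 <= F c.
  by move=> c0; rewrite -lee_fin /F fineK ?fin //; exact: conj_ge0.
have xp : 0 < (Kp + 1) * a * b by rewrite !mulr_gt0 //; lra.
have h1 : (Kp + 1) * a * b * (phi a * phi b) - Phi ((Kp + 1) * a * b) <= F (phi a * phi b).
  rewrite -lee_fin /F fineK ?fin ?mulr_ge0 //; exact: conj_lb.
have h2 := dp _ _ pa pb.
have h3 : F (phi a) * F (phi b) <= (a * phi a) * (b * phi b).
  by apply: ler_pM; [exact: Fge0|exact: Fge0|exact: Fub|exact: Fub].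
have h4 : Phi a * Phi b <= (a * phi a) * (b * phi b).
  by apply: ler_pM; [exact: Phi_ge0|exact: Phi_ge0|exact: Phi_le|exact: Phi_le].
have h5 : Kp * (F (phi a) * F (phi b)) <= Kp * ((a * phi a) * (b * phi b)).
  by rewrite ler_wpM2l //; lra.
rewrite /F in h1 h2 h3 h5 *.
set Q := (a * phi a) * (b * phi b) in h3 h4 h5 *.
have e : (Kp + 1) * a * b * (phi a * phi b) = (Kp + 1) * Q by rewrite /Q; ring.
rewrite e in h1.
rewrite mulrA in h5.
lra.
Qed.
End Young.
Arguments supermult {R Phi phi}.
Arguments inv_ge0 {R Phi phi}.
Arguments inv_lt {R Phi phi}.
Arguments inv_le {R Phi phi}.
Arguments Phi_gt0 {R Phi phi}.
Arguments Phi_ge0 {R Phi phi}.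
Arguments Phi_conv {R Phi phi}.
Arguments Phi_strict {R Phi phi}.
Arguments Phi_mono {R Phi phi}.
Arguments Phi_le {R Phi phi}.
Arguments Phi0 {R Phi phi}.

Lemma ext0_ge0 (R : realType) n (D : set 'rV[R]_n) (f : 'rV[R]_n -> \bar R) x :
  (forall x, D x -> (0 <= f x)%E) -> (0 <= ext0 D f x)%E.
Proof. by move=> f0; rewrite /ext0; case: asboolP => // /f0. Qed.

Theorem lemma3p1 (R : realType) (Phi Psi : R -> R) :
  young Phi -> young Psi -> Delta2 Phi -> Delta2 Psi ->
  (forall t : R, 0 <= t -> young_conj Phi t \is a fin_num) ->
  Deltap (fun t => fine (young_conj Phi t)) ->
  Deltap Psi ->
  exists C2 : R, 0 < C2 /\
    forall (N : nat) (Omega : set 'rV[R]_N) (g : 'rV[R]_N -> R) (C1 : R),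
      open Omega ->
      L1loc Omega g ->
      (forall x, Omega x -> 0 <= g x) ->
      0 < C1 ->
      (forall u, C1c Omega u ->
         (lux_weighted Psi Omega g u <= C1%:E * lux_grad Phi Omega u)%E) ->
      forall u, C1c Omega u ->
        (young_einv Psi (intRN Omega (fun x => (g x * Psi `|u x|)%:E))
         <= (C2 * C1)%:E *
            young_einv Phi (intRN Omega (fun x => (Phi (grad_norm u x))%:E)))%E.
Proof.
move=> [phi [mphi [_ [zphi iphi]]]] [psi [mpsi [_ [zpsi ipsi]]]] _ _ finc
  [Kp [Kp1 dKp]] [Ks [Ks1 dKs]].
pose c := Kp + 1.
have c0 : 0 < c by rewrite /c; lra.
have Ks0 : 0 < Ks by lra.
exists (Ks * c); split; first by rewrite mulr_gt0.
move=> N Omega g C1 _ _ g0 C10 hyp u Cu.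
have SM := supermult mphi zphi iphi Kp finc dKp Kp1.
have Phi_ge0' := @Phi_ge0 _ _ _ mphi zphi iphi.
have Psi_ge0' := @Phi_ge0 _ _ _ mpsi zpsi ipsi.
set B := intRN Omega (fun x => (Phi (grad_norm u x))%:E).
have B0 : (0 <= B)%E.
  apply: lint_ge0 => t; apply: ext0_ge0 => x _; rewrite lee_fin; apply: Phi_ge0'.
  exact: sqrtr_ge0.
case EB: B B0 => [b| |] //= b0; last first.
  by rewrite mulry gtr0_sg ?mulr_gt0 // mul1e leey.
rewrite lee_fin in b0.
set s := young_inv Phi b.
have s0 : 0 <= s := inv_ge0 mphi zphi iphi _ b0.
have G : forall s', s < s' -> (lux_grad Phi Omega u <= (c * s')%:E)%E.
  move=> s' ss'; have s'0 : 0 < s' by exact: le_lt_trans ss'.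
  have Pb := inv_lt mphi zphi iphi _ _ b0 ss'.
  have P0 : 0 < Phi s' := Phi_gt0 mphi zphi iphi _ s'0.
  apply: ereal_inf_lbound; exists (c * s') => //; split; first by rewrite mulr_gt0.
  set I := intRN _ _.
  have I0 : (0 <= I)%E.
    apply: lint_ge0 => t; apply: ext0_ge0 => x _; rewrite lee_fin; apply: Phi_ge0'.
    by rewrite divr_ge0 ?sqrtr_ge0 // mulr_ge0 // ltW.
  rewrite -(@lee_pmul2l _ (Phi s')%:E) // ?lte_fin // mule1.
  apply: le_trans (ltW (_ : b%:E < (Phi s')%:E)%E); last by rewrite lte_fin.
  rewrite -EB /I /intRN -lint_scale //; last first.
    move=> t; apply: ext0_ge0 => x _; rewrite lee_fin; apply: Phi_ge0'.
    by rewrite divr_ge0 ?sqrtr_ge0 // mulr_ge0 // ltW.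
  apply: lint_mono.
    move=> t; apply: mule_ge0; first by rewrite lee_fin ltW.
    apply: ext0_ge0 => x _.
    rewrite lee_fin; apply: Phi_ge0'.
    by rewrite divr_ge0 ?sqrtr_ge0 // mulr_ge0 // ltW.
  move=> t; rewrite /ext0; case: asboolP => _; last by rewrite mule0.
  rewrite -EFinM lee_fin.
  have y0 : 0 <= grad_norm u (rowt t) by exact: sqrtr_ge0.
  have q0 : 0 <= grad_norm u (rowt t) / (c * s') by rewrite divr_ge0 // mulr_ge0 // ltW.
  have := SM _ _ (ltW s'0) q0.
  have -> : (Kp + 1) * s' * (grad_norm u (rowt t) / (c * s')) = grad_norm u (rowt t).
    by rewrite -/c; field; rewrite !gt_eqF.
  by [].

set A := intRN Omega (fun x => (g x * Psi `|u x|)%:E).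
have ePsi : forall l, 0 < l -> forall t,
    (0 <= ext0 Omega (fun x => (Psi (`|u x| / l) * g x)%:E) (rowt t))%E.
  move=> l l0 t; apply: ext0_ge0 => x Ox; rewrite lee_fin mulr_ge0 ?g0 //.
  by apply: Psi_ge0'; rewrite divr_ge0 // ltW.
have C1c0 : 0 < C1 * c by rewrite mulr_gt0.
have W : forall lam, C1 * c * s < lam -> (A <= (Ks * Psi lam)%:E)%E.
  move=> lam hl.
  have hq : s < lam / (C1 * c) by rewrite ltr_pdivlMr // mulrC.
  pose s' := (s + lam / (C1 * c)) / 2.
  have ss' : s < s' by rewrite /s'; lra.
  have s'l : C1 * c * s' < lam.
    have : s' < lam / (C1 * c) by rewrite /s'; lra.
    by rewrite ltr_pdivlMr // mulrC.
  have Hlt : (lux_weighted Psi Omega g u < lam%:E)%E.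
    apply: (le_lt_trans (hyp u Cu)).
    apply: (@le_lt_trans _ _ (C1%:E * (c * s')%:E)%E).
      by rewrite lee_pmul2l ?lte_fin // G.
    by rewrite -EFinM lte_fin mulrA.
  have [_ [mu [mu0 Imu] <-] mul] := ereal_inf_lt Hlt.
  rewrite lte_fin in mul.
  have Pmu : 0 < Psi mu := Phi_gt0 mpsi zpsi ipsi _ mu0.
  have k0 : 0 < Ks * Psi mu by rewrite mulr_gt0.
  apply: (@le_trans _ _ ((Ks * Psi mu)%:E *
     intRN Omega (fun x => (Psi (`|u x| / mu) * g x)%:E))%E).
    rewrite /A /intRN -lint_scale //; last exact: ePsi.
    apply: lint_mono.
      move=> t; apply: ext0_ge0 => x Ox; rewrite lee_fin mulr_ge0 ?g0 //.
      exact: Psi_ge0'.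
    move=> t; rewrite /ext0; case: asboolP => Ox; last by rewrite mule0.
    rewrite -EFinM lee_fin.
    have u0 : 0 <= `|u (rowt t)| / mu by rewrite divr_ge0 // ltW.
    have := dKs _ _ (ltW mu0) u0.
    have -> : mu * (`|u (rowt t)| / mu) = `|u (rowt t)| by field; rewrite gt_eqF.
    move=> h; have gx := g0 _ Ox.
    by rewrite [g _ * _]mulrC mulrA ler_wpM2r.
  apply: le_trans (lee_wpmul2l _ Imu) _; first by rewrite lee_fin ltW.
  rewrite mule1 lee_fin ler_wpM2l ?ltW //.
  exact: Phi_strict mpsi zpsi ipsi _ _ mu0 mul.
have A0 : (0 <= A)%E.
  apply: lint_ge0 => t; apply: ext0_ge0 => x Ox; rewrite lee_fin mulr_ge0 ?g0 //.
  exact: Psi_ge0'.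
have hl1 : C1 * c * s < C1 * c * s + 1 by lra.
have WA := W _ hl1.
case EA: A A0 WA => [a| |] // a0 WA; 
rewrite /= -EFinM lee_fin; rewrite lee_fin in a0.
apply/ler_addgt0Pr => e e0.
set lam := C1 * c * s + e / Ks.
have Cs0 : 0 <= C1 * c * s by rewrite mulr_ge0 // ltW.
have hl : C1 * c * s < lam by rewrite /lam ltrDl divr_gt0.
have lam0 : 0 < lam by exact: le_lt_trans hl.
have Wl := W lam hl; rewrite EA lee_fin in Wl.
apply: (@le_trans _ _ (Ks * lam)).
  apply: (inv_le mpsi zpsi ipsi) => // t t0 Pt.
  rewrite leNgt; apply/negP => lt.
  have Kl0 : 0 < Ks * lam by rewrite mulr_gt0.
  have h1 := Phi_strict mpsi zpsi ipsi _ _ Kl0 lt.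
  have h2 := Phi_conv mpsi zpsi ipsi _ _ (ltW Ks1) (ltW lam0).
  lra.
have -> : Ks * lam = Ks * c * C1 * s + e by rewrite /lam; field; rewrite gt_eqF.
by [].
Qed.
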